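(* For any locale $L$, the subset $M_L:=\bigcap_{a\in L}\mathfrak{o}(a^*\vee a^{**})$ is a dense extremally disconnected sublocale of $L$, and every dense extremally disconnected sublocale $S$ of $L$ satisfies $S\subseteq M_L$; i.e. $M_L$ is the largest dense extremally disconnected sublocale of $L$.
   Context: A frame (locale) $L$ is a complete lattice in which finite meets distribute over arbitrary joins; $a\to b$ denotes the Heyting implication and $a^*=a\to0$ the pseudocomplement. A sublocale of $L$ is a subset $S\subseteq L$ closed under arbitrary meets such that $a\to s\in S$ for all $a\in L$, $s\in S$; it is a frame under the inherited order. The open sublocale of $a\in L$ is $\mathfrak{o}(a)=\{a\to b\mid b\in L\}$. A sublocale $S$ is dense if $\bigwedge S=0$. A locale (frame) is extremally disconnected if $x^*\vee x^{**}=1$ for all its elements $x$ (pseudocomplements and joins computed in that frame). *)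

(* Defs.v *)
Record frame := Frame {
  car :> Type;
  le : car -> car -> Prop;
  le_refl : forall x, le x x;
  le_trans : forall x y z, le x y -> le y z -> le x z;
  le_antisym : forall x y, le x y -> le y x -> x = y;
  sup : (car -> Prop) -> car;
  sup_ub : forall (A : car -> Prop) x, A x -> le x (sup A);
  sup_least : forall (A : car -> Prop) y, (forall x, A x -> le x y) -> le (sup A) y;
  meet : car -> car -> car;
  meet_lb1 : forall a b, le (meet a b) a;
  meet_lb2 : forall a b, le (meet a b) b;
  meet_glb : forall a b c, le c a -> le c b -> le c (meet a b);
  meet_sup_distr : forall a (A : car -> Prop),
    meet a (sup A) = sup (fun y => exists x, A x /\ y = meet a x)
}.

Arguments le {L} : rename.
Arguments sup {L} : rename.
Arguments meet {L} : rename.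

Section FrameOps.
Variable L : frame.

Definition inf (A : L -> Prop) : L := sup (fun x => forall a, A a -> le x a).
Definition top : L := sup (fun _ => True).
Definition bot : L := sup (fun _ => False).
Definition join (a b : L) : L := sup (fun x => x = a \/ x = b).

Definition imp (a b : L) : L := sup (fun c => le (meet c a) b).
Definition pc (a : L) : L := imp a bot.

Definition is_sublocale (S : L -> Prop) : Prop :=
  (forall A : L -> Prop, (forall x, A x -> S x) -> S (inf A)) /\
  (forall a s, S s -> S (imp a s)).

Definition open_sub (a : L) : L -> Prop := fun x => exists b, x = imp a b.

Definition dense (S : L -> Prop) : Prop := inf S = bot.

(* Frame operations of a sublocale S, computed in S with the inherited order:
   joins in S, bottom of S, pseudocomplement in S; the top of S is top. *)
Definition sjoin (S : L -> Prop) (A : L -> Prop) : L :=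
  inf (fun s => S s /\ forall a, A a -> le a s).
Definition sbot (S : L -> Prop) : L := inf S.
Definition spc (S : L -> Prop) (x : L) : L :=
  sjoin S (fun s => S s /\ le (meet s x) (sbot S)).

Definition ext_disc_sub (S : L -> Prop) : Prop :=
  forall x, S x ->
    sjoin S (fun y => y = spc S x \/ y = spc S (spc S x)) = top.

Definition M_L : L -> Prop :=
  fun x => forall a : L, open_sub (join (pc a) (pc (pc a))) x.

End FrameOps.

Arguments inf {L}. Arguments top {L}. Arguments bot {L}. Arguments join {L}.
Arguments imp {L}. Arguments pc {L}. Arguments is_sublocale {L}.
Arguments open_sub {L}. Arguments dense {L}. Arguments sjoin {L}.
Arguments sbot {L}. Arguments spc {L}. Arguments ext_disc_sub {L}.

(* Main.v *)
Require Import Defs.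

Lemma lrefl {L : frame} (x : L) : le x x. Proof. apply le_refl. Qed.
Lemma ltrans {L : frame} (x y z : L) : le x y -> le y z -> le x z.
Proof. apply le_trans. Qed.
Lemma lanti {L : frame} (x y : L) : le x y -> le y x -> x = y.
Proof. apply le_antisym. Qed.
Lemma supub {L : frame} (A : L -> Prop) x : A x -> le x (sup A).
Proof. apply sup_ub. Qed.
Lemma supl {L : frame} (A : L -> Prop) y : (forall x, A x -> le x y) -> le (sup A) y.
Proof. apply sup_least. Qed.
Lemma mlb1 {L : frame} (a b : L) : le (meet a b) a. Proof. apply meet_lb1. Qed.
Lemma mlb2 {L : frame} (a b : L) : le (meet a b) b. Proof. apply meet_lb2. Qed.
Lemma mglb {L : frame} (a b c : L) : le c a -> le c b -> le c (meet a b).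
Proof. apply meet_glb. Qed.

Lemma mle1 {L : frame} (a b c : L) : le a c -> le (meet a b) c.
Proof. intro H. eapply ltrans; [apply mlb1|exact H]. Qed.
Lemma mle2 {L : frame} (a b c : L) : le b c -> le (meet a b) c.
Proof. intro H. eapply ltrans; [apply mlb2|exact H]. Qed.
Lemma meet_comm {L : frame} (a b : L) : meet a b = meet b a.
Proof. apply lanti; apply mglb; first [apply mlb1|apply mlb2]. Qed.

Lemma inf_lb {L : frame} (A : L -> Prop) a : A a -> le (inf A) a.
Proof. intro H. unfold inf. apply supl. intros x Hx. apply Hx, H. Qed.
Lemma inf_gr {L : frame} (A : L -> Prop) y : (forall a, A a -> le y a) -> le y (inf A).
Proof. intro H. unfold inf. apply supub. exact H. Qed.
Lemma top_ge {L : frame} (x : L) : le x top.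
Proof. unfold top. apply supub. exact I. Qed.
Lemma bot_le {L : frame} (x : L) : le bot x.
Proof. unfold bot. apply supl. intros y []. Qed.
Lemma join_l {L : frame} (a b : L) : le a (join a b).
Proof. unfold join. apply supub. auto. Qed.
Lemma join_r {L : frame} (a b : L) : le b (join a b).
Proof. unfold join. apply supub. auto. Qed.

Lemma imp_adj {L : frame} (y a b : L) : le y (imp a b) <-> le (meet y a) b.
Proof.
  split.
  - intro H. apply ltrans with (meet (imp a b) a).
    + apply mglb; [apply mle1, H | apply mlb2].
    + rewrite meet_comm. unfold imp. rewrite meet_sup_distr. apply supl.
      intros x [c [Hc ->]]. rewrite meet_comm. exact Hc.
  - intro H. unfold imp. apply supub. exact H.
Qed.

Lemma imp_ge {L : frame} (c x : L) : le x (imp c x).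
Proof. apply imp_adj. apply mlb1. Qed.
Lemma imp_ev {L : frame} (a b : L) : le (meet (imp a b) a) b.
Proof. apply imp_adj. apply lrefl. Qed.

Lemma open_fix {L : frame} (c x : L) : le (imp c x) x -> open_sub c x.
Proof. intro H. exists x. apply lanti; [apply imp_ge | exact H]. Qed.

Lemma open_fix2 {L : frame} (c x : L) : open_sub c x -> x = imp c x.
Proof.
  intros [b ->]. apply lanti; [apply imp_ge|].
  apply imp_adj. apply ltrans with (meet (imp c b) c); [|apply imp_ev].
  apply mglb; [apply imp_ev|apply mlb2].
Qed.

Lemma pc_ev {L : frame} (a : L) : le (meet (pc a) a) bot.
Proof. apply imp_ev. Qed.
Lemma pc_anti {L : frame} (u v : L) : le u v -> le (pc v) (pc u).
Proof. intro H. apply imp_adj. apply ltrans with (meet (pc v) v); [|apply pc_ev].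
  apply mglb; [apply mlb1| apply mle2, H]. Qed.
Lemma pc_pc {L : frame} (a : L) : le a (pc (pc a)).
Proof. apply imp_adj. rewrite meet_comm. apply pc_ev. Qed.

Lemma sub_inf {L : frame} (S : L -> Prop) : is_sublocale S -> S (inf S).
Proof. intros [H _]. apply H. auto. Qed.
Lemma dense_bot {L : frame} (S : L -> Prop) : is_sublocale S -> dense S -> S bot.
Proof. intros H D. unfold dense in D. rewrite <- D. apply sub_inf, H. Qed.
Lemma sub_pc {L : frame} (S : L -> Prop) a : is_sublocale S -> dense S -> S (pc a).
Proof. intros H D. apply (proj2 H). apply dense_bot; auto. Qed.

Lemma sjoin_max {L : frame} (S A : L -> Prop) m :
  S m -> A m -> (forall a, A a -> le a m) -> sjoin S A = m.
Proof.
  intros Sm Am Hm. apply lanti.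
  - apply inf_lb. split; auto.
  - apply inf_gr. intros s [_ Hs]. apply Hs, Am.
Qed.
Lemma sjoin_le {L : frame} (S A : L -> Prop) s :
  S s -> (forall a, A a -> le a s) -> le (sjoin S A) s.
Proof. intros. apply inf_lb. split; auto. Qed.

Lemma spc_dense {L : frame} (S : L -> Prop) x :
  is_sublocale S -> dense S -> spc S x = pc x.
Proof.
  intros H D. unfold spc, sbot. unfold dense in D. rewrite D.
  apply sjoin_max.
  - apply sub_pc; auto.
  - split; [apply sub_pc; auto| apply pc_ev].
  - intros s [_ Hs]. apply imp_adj. exact Hs.
Qed.

Lemma M_fix {L : frame} (x a : L) : M_L L x ->
  x = imp (join (pc a) (pc (pc a))) x.
Proof. intro H. apply open_fix2, H. Qed.

Lemma M_sub {L : frame} : is_sublocale (M_L L).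
Proof.
  split.
  - intros A HA a. apply open_fix. apply inf_gr. intros s Hs.
    rewrite (M_fix s a (HA s Hs)). apply imp_adj.
    apply ltrans with (inf A); [apply imp_ev| apply inf_lb, Hs].
  - intros b s Hs a. apply open_fix. apply imp_adj.
    set (c := join (pc a) (pc (pc a))).
    apply ltrans with (imp c s); [| pose proof (M_fix s a Hs) as Ef; fold c in Ef; rewrite <- Ef; apply lrefl].
    apply imp_adj.
    set (w := imp c (imp b s)).
    apply ltrans with (meet (imp b s) b); [|apply imp_ev].
    apply mglb; [|apply mle1, mlb2].
    apply ltrans with (meet w c); [|apply imp_ev].
    apply mglb; [apply mle1, mlb1 | apply mlb2].
Qed.

Lemma M_bot {L : frame} : M_L L bot.
Proof.
  intro a. apply open_fix.
  set (c := join (pc a) (pc (pc a))). set (w := imp c bot).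
  assert (Hw : le (meet w c) bot) by apply imp_ev.
  apply ltrans with (meet (pc (pc (pc a))) (pc (pc a))); [|apply pc_ev].
  apply mglb; apply imp_adj.
  - apply ltrans with (meet w c); [|exact Hw].
    apply mglb; [apply mlb1| apply mle2, join_r].
  - apply ltrans with (meet w c); [|exact Hw].
    apply mglb; [apply mlb1| apply mle2, join_l].
Qed.

Lemma M_dense {L : frame} : dense (M_L L).
Proof. unfold dense. apply lanti; [apply inf_lb, M_bot| apply bot_le]. Qed.

Theorem proposition4p2 (L : frame) :
  (is_sublocale (M_L L) /\ dense (M_L L) /\ ext_disc_sub (M_L L)) /\
  (forall S : L -> Prop,
     is_sublocale S -> dense S -> ext_disc_sub S ->
     forall x, S x -> M_L L x).
Proof.
  split; [split; [apply M_sub| split; [apply M_dense|]]|].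
  - intros x Hx.
    rewrite (spc_dense _ x M_sub M_dense).
    rewrite (spc_dense _ (pc x) M_sub M_dense).
    apply lanti; [apply top_ge|]. apply inf_gr. intros s [Ss Hs].
    rewrite (M_fix s x Ss). apply imp_adj. apply mle2.
    unfold join. apply supl. intros y [-> | ->]; apply Hs; auto.
  - intros S HS D E x Sx a. apply open_fix.
    set (c := join (pc a) (pc (pc a))). set (y := imp c x).
    assert (Hy : le (meet y c) x) by apply imp_ev.
    assert (Sz : S (imp y x)) by (apply (proj2 HS); exact Sx).
    pose proof (E (pc a) (sub_pc S a HS D)) as Ea.
    rewrite (spc_dense S (pc a) HS D), (spc_dense S (pc (pc a)) HS D) in Ea.
    assert (Ht : le top (imp y x)).
    { rewrite <- Ea. apply sjoin_le; [exact Sz|].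
      intros b [-> | ->]; apply imp_adj; rewrite meet_comm;
        apply ltrans with (meet y c); try exact Hy; apply mglb; try apply mlb1.
      - apply mle2, join_r.
      - apply mle2. apply ltrans with (pc a); [apply pc_anti, pc_pc| apply join_l]. }
    apply ltrans with (meet (imp y x) y); [|apply imp_ev].
    apply mglb; [apply ltrans with top; [apply top_ge|exact Ht]| apply lrefl].
Qed.
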